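(* Let $G$ be a discrete group. If every countable subgroup $H$ of $G$ satisfies the $\ell^1$ Bass conjecture (i.e. $HS^1:K_0(\ell^1(H))\to\ell^1([H])$ takes values in $\bigoplus_{\mathrm{FC}(H)}\mathbb{C}$), then $G$ satisfies the $\ell^1$ Bass conjecture, i.e. $HS^1:K_0(\ell^1(G))\to\ell^1([G])$ takes values in $\bigoplus_{\mathrm{FC}(G)}\mathbb{C}$.
   Context: For a discrete group $G$: $[G]$ is the set of conjugacy classes, $\mathrm{FC}(G)\subset[G]$ those of elements of finite order; $\ell^1(G)$ is the Banach convolution algebra of absolutely summable functions $G\to\mathbb{C}$, written $a=\sum a_g g$; $\ell^1([G])$ is the Banach space of absolutely summable functions on $[G]$. The trace $p:\ell^1(G)\to\ell^1([G])$, $p(a)=\sum_{[x]}\big(\sum_{g\in[x]}a_g\big)[x]$, induces the $\ell^1$ Hattori–Stallings trace $HS^1:K_0(\ell^1(G))\to\ell^1([G])$ (evaluate $p$ on the trace of an idempotent matrix representing a finitely generated projective module). *)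

(* Defs.v *)
From Stdlib Require Import Reals List ProofIrrelevance.
Import ListNotations.
Open Scope R_scope.

Definition C : Type := (R * R)%type.
Definition C0 : C := (0, 0).
Definition Cadd (z w : C) : C := (fst z + fst w, snd z + snd w).
Definition Copp (z : C) : C := (- fst z, - snd z).
Definition Csub (z w : C) : C := Cadd z (Copp w).
Definition Cmul (z w : C) : C :=
  (fst z * fst w - snd z * snd w, fst z * snd w + snd z * fst w).
Definition Cnorm (z : C) : R := sqrt (fst z * fst z + snd z * snd z).

Definition Csum {T : Type} (f : T -> C) (L : list T) : C :=
  fold_right Cadd C0 (map f L).
Definition Rsum {T : Type} (f : T -> R) (L : list T) : R :=
  fold_right Rplus 0 (map f L).

Definition has_sum_on {T : Type} (P : T -> Prop) (f : T -> C) (s : C) : Prop :=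
  forall eps : R, 0 < eps ->
    exists L0 : list T, (forall x, In x L0 -> P x) /\
      forall L : list T, NoDup L -> (forall x, In x L -> P x) -> incl L0 L ->
        Cnorm (Csub (Csum f L) s) < eps.

Definition has_sum {T : Type} (f : T -> C) (s : C) : Prop :=
  has_sum_on (fun _ => True) f s.

Definition is_l1 {T : Type} (f : T -> C) : Prop :=
  exists M : R, forall L : list T, NoDup L -> Rsum (fun x => Cnorm (f x)) L <= M.

Record group := Group {
  gT :> Type;
  gmul : gT -> gT -> gT;
  ginv : gT -> gT;
  gone : gT;
  gmulA : forall x y z, gmul x (gmul y z) = gmul (gmul x y) z;
  gmul1l : forall x, gmul gone x = x;
  gmulVl : forall x, gmul (ginv x) x = gone
}.

Fixpoint gpow (G : group) (x : G) (n : nat) : G :=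
  match n with O => gone G | S m => gmul G x (gpow G x m) end.

Definition finite_order (G : group) (x : G) : Prop :=
  exists n : nat, (0 < n)%nat /\ gpow G x n = gone G.

Definition conjugate (G : group) (x y : G) : Prop :=
  exists g : G, y = gmul G (ginv G g) (gmul G x g).

Record subgroup (G : group) := Subgroup {
  sg_mem : G -> Prop;
  sg_one : sg_mem (gone G);
  sg_mul : forall x y, sg_mem x -> sg_mem y -> sg_mem (gmul G x y);
  sg_inv : forall x, sg_mem x -> sg_mem (ginv G x)
}.

Section SubGroup.
Variables (G : group) (S : subgroup G).
Definition sub_T : Type := { x : G | sg_mem G S x }.
Definition sub_mul (x y : sub_T) : sub_T :=
  exist _ (gmul G (proj1_sig x) (proj1_sig y))
          (sg_mul G S _ _ (proj2_sig x) (proj2_sig y)).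
Definition sub_inv (x : sub_T) : sub_T :=
  exist _ (ginv G (proj1_sig x)) (sg_inv G S _ (proj2_sig x)).
Definition sub_one : sub_T := exist _ (gone G) (sg_one G S).

Lemma sub_eq (x y : sub_T) : proj1_sig x = proj1_sig y -> x = y.
Proof.
  destruct x as [x px], y as [y py]; simpl; intros ->.
  f_equal; apply proof_irrelevance.
Qed.

Lemma sub_mulA x y z : sub_mul x (sub_mul y z) = sub_mul (sub_mul x y) z.
Proof. apply sub_eq; simpl; apply gmulA. Qed.
Lemma sub_mul1l x : sub_mul sub_one x = x.
Proof. apply sub_eq; simpl; apply gmul1l. Qed.
Lemma sub_mulVl x : sub_mul (sub_inv x) x = sub_one.
Proof. apply sub_eq; simpl; apply gmulVl. Qed.

Definition sub_group : group :=
  Group sub_T sub_mul sub_inv sub_one sub_mulA sub_mul1l sub_mulVl.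
End SubGroup.

Definition countable_group (G : group) : Prop :=
  exists f : G -> nat, forall x y, f x = f y -> x = y.

(** An n x n matrix over l^1(G) is E : nat -> nat -> (G -> C), with entries
    E i j (i, j < n) absolutely summable functions G -> C. *)
Definition l1_matrix (G : group) (n : nat) (E : nat -> nat -> G -> C) : Prop :=
  forall i j, (i < n)%nat -> (j < n)%nat -> is_l1 (E i j).

(** E * E = E in M_n(l^1(G)), convolution (a*b)(g) = sum_h a(h) b(h^-1 g) *)
Definition idempotent_l1 (G : group) (n : nat) (E : nat -> nat -> G -> C) : Prop :=
  forall i k, (i < n)%nat -> (k < n)%nat -> forall g : G,
    has_sum (fun h : G =>
      Csum (fun j => Cmul (E i j h) (E j k (gmul G (ginv G h) g))) (seq 0 n))
      (E i k g).

Definition mx_trace (G : group) (n : nat) (E : nat -> nat -> G -> C) : G -> C :=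
  fun g => Csum (fun i => E i i g) (seq 0 n).

(** [p(a)] evaluated at the class [x] has value s *)
Definition class_value (G : group) (a : G -> C) (x : G) (s : C) : Prop :=
  has_sum_on (conjugate G x) a s.

(** [p(a)] lies in the direct sum of copies of C indexed by FC(G):
    it is supported on finitely many conjugacy classes, each consisting
    of elements of finite order. *)
Definition in_FC_sum (G : group) (a : G -> C) : Prop :=
  exists L : list G, (forall y, In y L -> finite_order G y) /\
    forall (x : G) (s : C), class_value G a x s -> s <> C0 ->
      exists y, In y L /\ conjugate G x y.

(** Since K_0(l^1 G) is generated by classes of idempotent matrices and
    HS^1 [E] = p(tr E), this is the condition on all idempotent matrices. *)
Definition l1_Bass (G : group) : Prop :=
  forall (n : nat) (E : nat -> nat -> G -> C),
    l1_matrix G n E -> idempotent_l1 G n E ->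
    in_FC_sum G (mx_trace G n E).

(* Main.v *)
Require Import Defs.
From Stdlib Require Import Reals List Lra Lia Classical ClassicalEpsilon ProofIrrelevance Cantor FinFun.
Import ListNotations.
Open Scope R_scope.

Lemma Cadd_0_l z : Cadd C0 z = z.
Proof. destruct z; unfold Cadd, C0; simpl; f_equal; ring. Qed.
Lemma Cadd_0_r z : Cadd z C0 = z.
Proof. destruct z; unfold Cadd, C0; simpl; f_equal; ring. Qed.
Lemma Cadd_assoc a b c : Cadd a (Cadd b c) = Cadd (Cadd a b) c.
Proof. destruct a, b, c; unfold Cadd; simpl; f_equal; ring. Qed.
Lemma Cmul_0_l z : Cmul C0 z = C0.
Proof. destruct z; unfold Cmul, C0; simpl; f_equal; ring. Qed.

Lemma Csum_app {T} (f : T -> Defs.C) l1 l2 : Csum f (l1 ++ l2) = Cadd (Csum f l1) (Csum f l2).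
Proof. induction l1; simpl. rewrite Cadd_0_l; auto. unfold Csum in *; simpl. rewrite IHl1, Cadd_assoc; auto. Qed.
Lemma Csum_map {T U} (f : U -> Defs.C) (g : T -> U) l : Csum f (map g l) = Csum (fun x => f (g x)) l.
Proof. unfold Csum; rewrite map_map; auto. Qed.
Lemma Csum_zero {T} (f : T -> Defs.C) l : (forall x, In x l -> f x = C0) -> Csum f l = C0.
Proof. induction l; simpl; intros H; auto. unfold Csum in *; simpl. rewrite H by auto. rewrite IHl by auto. apply Cadd_0_l. Qed.
Lemma Rsum_map {T U} (f : U -> R) (g : T -> U) l : Rsum f (map g l) = Rsum (fun x => f (g x)) l.
Proof. unfold Rsum; rewrite map_map; auto. Qed.

Lemma Cnorm_ge0 z : 0 <= Cnorm z.
Proof. apply sqrt_pos. Qed.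
Lemma Cnorm_eq0 z : Cnorm z = 0 -> z = C0.
Proof. destruct z as [a b]; unfold Cnorm; simpl; intros H.
  apply sqrt_eq_0 in H; [|nra]. unfold C0; f_equal; nra. Qed.
Lemma Cnorm_pos z : z <> C0 -> 0 < Cnorm z.
Proof. intros H. destruct (Cnorm_ge0 z) as [h|h]; auto. symmetry in h. apply Cnorm_eq0 in h; tauto. Qed.
Lemma Cnorm_sub0 s : Cnorm (Csub C0 s) = Cnorm s.
Proof. destruct s; unfold Cnorm, Csub, Cadd, Copp, C0; simpl; f_equal; ring. Qed.

Lemma exists_filter {T} (L : list T) (Q : T -> Prop) :
  exists R, NoDup R /\ forall x, In x R <-> In x L /\ Q x.
Proof.
  induction L as [|a L [R [HR HRe]]].
  - exists []; split; [constructor|simpl; tauto].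
  - destruct (classic (Q a /\ ~ In a R)) as [[Qa Na]|Hn].
    + exists (a :: R); split; [constructor; auto|].
      intros x; simpl; rewrite HRe; split.
      * intros [<-|[]]; auto.
      * intros [[<-|h] q]; auto.
    + exists R; split; auto. intros x; rewrite HRe; simpl; split; [tauto|].
      intros [[<-|h] q]; auto. apply NNPP; intros N; apply Hn; split; auto.
      intros I; apply N; apply HRe in I; tauto.
Qed.

Lemma mulV (G : group) (x : G) : gmul G x (ginv G x) = gone G.
Proof.
  rewrite <- (gmul1l G (gmul G x (ginv G x))).
  rewrite <- (gmulVl G (ginv G x)) at 1.
  rewrite <- gmulA, (gmulA G (ginv G x)), gmulVl, gmul1l. apply gmulVl.
Qed.
Lemma mul1r (G : group) (x : G) : gmul G x (gone G) = x.
Proof. rewrite <- (gmulVl G x), gmulA, mulV, gmul1l; auto. Qed.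
Lemma left_inv_uniq (G : group) (a z : G) : gmul G a z = gone G -> a = ginv G z.
Proof. intros H. rewrite <- (mul1r G a), <- (mulV G z), gmulA, H, gmul1l; auto. Qed.
Lemma inv_inv (G : group) (x : G) : ginv G (ginv G x) = x.
Proof. symmetry; apply left_inv_uniq, mulV. Qed.
Lemma inv_mul (G : group) (x y : G) : ginv G (gmul G x y) = gmul G (ginv G y) (ginv G x).
Proof. symmetry; apply left_inv_uniq.
  rewrite <- gmulA, (gmulA G (ginv G x)), gmulVl, gmul1l, gmulVl; auto. Qed.
Lemma inv_one (G : group) : ginv G (gone G) = gone G.
Proof. symmetry; apply left_inv_uniq, gmul1l. Qed.

Lemma conj_refl (G : group) (x : G) : conjugate G x x.
Proof. exists (gone G). rewrite inv_one, gmul1l, mul1r; auto. Qed.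
Lemma conj_trans (G : group) (x y z : G) : conjugate G x y -> conjugate G y z -> conjugate G x z.
Proof. intros [g ->] [h ->]. exists (gmul G g h). rewrite inv_mul.
  rewrite <- !gmulA. reflexivity. Qed.
Lemma conj_sym (G : group) (x y : G) : conjugate G x y -> conjugate G y x.
Proof. intros [g ->]. exists (ginv G g). rewrite inv_inv.
  rewrite !gmulA, mulV, gmul1l, <- gmulA, mulV, mul1r; auto. Qed.

Lemma proj1_inj (G : group) (S : subgroup G) : FinFun.Injective (fun h : sub_T G S => proj1_sig h).
Proof. intros x y; apply sub_eq. Qed.

Lemma transfer (G : group) (S : subgroup G) (P : G -> Prop) (P' : sub_T G S -> Prop)
  (f : G -> Defs.C) s :
  (forall h, P' h -> P (proj1_sig h)) ->
  (forall g, P g -> f g <> C0 -> exists h, proj1_sig h = g /\ P' h) ->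
  has_sum_on P f s -> has_sum_on P' (fun h => f (proj1_sig h)) s.
Proof.
  intros H1 H2 Hs eps Heps.
  destruct (Hs eps Heps) as [L0 [HL0P HL0]].
  assert (Hlift : exists L0', (forall h, In h L0' -> P' h) /\
     forall g, In g L0 -> f g <> C0 -> exists h, In h L0' /\ proj1_sig h = g).
  { clear HL0. induction L0 as [|a L0 IH].
    - exists []; split; simpl; tauto.
    - destruct IH as [L1 [A1 B1]]. { intros; apply HL0P; simpl; auto. }
      destruct (classic (f a = C0)) as [Ha|Ha].
      + exists L1; split; auto. intros g [<-|Ig] Hg; [tauto|]. auto.
      + destruct (H2 a) as [h [Eh Ph]]; [apply HL0P; simpl; auto|auto|].
        exists (h :: L1); split.
        * intros x [<-|I]; auto.
        * intros g [<-|Ig] Hg; [exists h; simpl; auto|].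
          destruct (B1 g Ig Hg) as [k [Ik Ek]]; exists k; simpl; auto. }
  destruct Hlift as [L0' [A0 B0]].
  exists L0'; split; auto.
  intros L' ND PL' Inc.
  destruct (exists_filter L0 (fun x => ~ In x (map (fun h : sub_T G S => proj1_sig h) L'))) as [R [NDR HR]].
  specialize (HL0 (map (fun h : sub_T G S => proj1_sig h) L' ++ R)).
  rewrite Csum_app, Csum_map in HL0.
  rewrite (Csum_zero f R), Cadd_0_r in HL0.
  - apply HL0.
    + apply NoDup_app; auto. apply Injective_map_NoDup; auto. apply proj1_inj.
      intros a Ia IR; apply HR in IR; tauto.
    + intros x Ix; apply in_app_or in Ix; destruct Ix as [Ix|Ix].
      * apply in_map_iff in Ix; destruct Ix as [h [<- Ih]]; auto.
      * apply HR in Ix; apply HL0P; tauto.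
    + intros x Ix. apply in_or_app. destruct (classic (In x (map (fun h : sub_T G S => proj1_sig h) L'))); auto.
      right; apply HR; auto.
  - intros x Ix; apply HR in Ix; destruct Ix as [Ix Nx].
    apply NNPP; intros Hx. destruct (B0 x Ix Hx) as [h [Ih <-]].
    apply Nx, in_map; auto.
Qed.

Lemma zero_sum (T : Type) (P : T -> Prop) (f : T -> Defs.C) s :
  (forall x, P x -> f x = C0) -> has_sum_on P f s -> s = C0.
Proof.
  intros Hz Hs. apply Cnorm_eq0.
  apply Rle_antisym; [|apply Cnorm_ge0].
  apply Rnot_lt_le; intros Hp.
  destruct (Hs _ Hp) as [L0 [HP HL]].
  destruct (exists_filter L0 (fun _ => True)) as [R [NDR HR]].
  specialize (HL R NDR).
  rewrite Csum_zero, Cnorm_sub0 in HL.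
  - apply (Rlt_irrefl (Cnorm s)); apply HL.
    + intros x Ix; apply HR in Ix; apply HP; tauto.
    + intros x Ix; apply HR; auto.
  - intros x Ix; apply Hz, HP, HR, Ix.
Qed.

Lemma Rsum_lb {T} (g : T -> R) eps L : (forall x, In x L -> eps < g x) ->
  eps * INR (length L) <= Rsum g L.
Proof.
  induction L as [|a L IH]; intros H.
  - unfold Rsum; simpl; lra.
  - change (length (a::L)) with (S (length L)). rewrite S_INR. unfold Rsum in *; simpl.
    assert (eps < g a) by (apply H; simpl; auto).
    assert (eps * INR (length L) <= fold_right Rplus 0 (map g L)) by (apply IH; intros; apply H; simpl; auto).
    lra.
Qed.

Lemma l1_finite {T} (f : T -> Defs.C) eps : is_l1 f -> 0 < eps ->
  exists L, forall g, eps < Cnorm (f g) -> In g L.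
Proof.
  intros [M HM] Heps.
  destruct (INR_archimed eps M) as [N HN]; [lra|].
  assert (Hb : forall L, NoDup L -> (forall x, In x L -> eps < Cnorm (f x)) -> (length L < N)%nat).
  { intros L ND HP. specialize (HM L ND). pose proof (Rsum_lb _ _ _ HP).
    destruct (Nat.lt_ge_cases (length L) N) as [h|h]; auto.
    apply le_INR in h. nra. }
  assert (Hk : forall k L, NoDup L -> (forall x, In x L -> eps < Cnorm (f x)) ->
     (N - length L <= k)%nat -> exists L', forall g, eps < Cnorm (f g) -> In g L').
  { induction k as [|k IH]; intros L ND HP Hle.
    - specialize (Hb L ND HP). lia.
    - destruct (classic (forall g, eps < Cnorm (f g) -> In g L)) as [Hall|Hn]; [exists L; auto|].
      apply not_all_ex_not in Hn; destruct Hn as [x Hx].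
      apply imply_to_and in Hx; destruct Hx as [Px Nx].
      apply (IH (x :: L)).
      + constructor; auto.
      + intros y [<-|I]; auto.
      + specialize (Hb L ND HP). simpl. lia. }
  apply (Hk N []); simpl; [constructor|tauto|lia].
Qed.

Definition letter (G : group) (gen : nat -> G) (l : bool * nat) : G :=
  if fst l then ginv G (gen (snd l)) else gen (snd l).
Fixpoint evalw (G : group) (gen : nat -> G) (w : list (bool * nat)) : G :=
  match w with [] => gone G | l :: w' => gmul G (letter G gen l) (evalw G gen w') end.
Definition flip (l : bool * nat) : bool * nat := (negb (fst l), snd l).

Lemma evalw_app G gen w1 w2 : evalw G gen (w1 ++ w2) = gmul G (evalw G gen w1) (evalw G gen w2).
Proof. induction w1; simpl. rewrite gmul1l; auto. rewrite IHw1, gmulA; auto. Qed.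
Lemma letter_flip G gen l : letter G gen (flip l) = ginv G (letter G gen l).
Proof. destruct l as [[|] m]; unfold letter, flip; simpl; auto. rewrite inv_inv; auto. Qed.
Lemma evalw_inv G gen w : evalw G gen (rev (map flip w)) = ginv G (evalw G gen w).
Proof. induction w; simpl. rewrite inv_one; auto.
  rewrite evalw_app, IHw, inv_mul; simpl. rewrite letter_flip, mul1r; auto. Qed.

Definition genH (G : group) (gen : nat -> G) : subgroup G.
Proof.
  refine (Subgroup G (fun x => exists w, x = evalw G gen w) _ _ _).
  - exists []; auto.
  - intros x y [w1 ->] [w2 ->]; exists (w1 ++ w2); rewrite evalw_app; auto.
  - intros x [w ->]; exists (rev (map flip w)); rewrite evalw_inv; auto.
Defined.

Lemma genH_gen G gen m : sg_mem G (genH G gen) (gen m).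
Proof. exists [(false, m)]; simpl. unfold letter; simpl. rewrite mul1r; auto. Qed.

Fixpoint codew (w : list (bool * nat)) : nat :=
  match w with [] => O | (b, m) :: w' => S (to_nat (to_nat (if b then 1%nat else 0%nat, m), codew w')) end.

Lemma to_nat_inj p q : to_nat p = to_nat q -> p = q.
Proof. intros H; rewrite <- (cancel_of_to p), <- (cancel_of_to q), H; auto. Qed.

Lemma codew_inj w1 w2 : codew w1 = codew w2 -> w1 = w2.
Proof.
  revert w2; induction w1 as [|[b m] w1 IH]; intros [|[b' m'] w2]; cbn [codew]; try discriminate; auto.
  intros H; apply (f_equal pred) in H; cbn [pred] in H. apply to_nat_inj in H; rename H into H'. pose proof (f_equal fst H') as E1; pose proof (f_equal snd H') as E2; cbn [fst snd] in E1, E2.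
  apply to_nat_inj in E1. pose proof (f_equal snd E1) as Em; pose proof (f_equal fst E1) as Eb; cbn [fst snd] in Em, Eb; subst m'. apply IH in E2; subst.
  destruct b, b'; try discriminate; auto.
Qed.

Definition sub_word G gen (x : sub_T G (genH G gen)) : list (bool * nat) :=
  proj1_sig (constructive_indefinite_description _
     (proj2_sig x : exists w, proj1_sig x = evalw G gen w)).

Lemma genH_countable G gen : countable_group (sub_group G (genH G gen)).
Proof.
  exists (fun x => codew (sub_word G gen x)).
  intros x y H. apply codew_inj in H. apply sub_eq.
  unfold sub_word in H.
  destruct (constructive_indefinite_description _ _) as [w1 E1].
  destruct (constructive_indefinite_description _ _) as [w2 E2]. simpl in H.
  subst; rewrite E1, E2; auto.
Qed.

Lemma small_inv c : 0 < c -> exists k, / (INR k + 1) < c.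
Proof.
  intros Hc. destruct (INR_unbounded (/ c)) as [k Hk]. exists k.
  pose proof (pos_INR k).
  rewrite <- (Rinv_inv c). apply Rinv_lt_contravar.
  - apply Rmult_lt_0_compat; [apply Rinv_0_lt_compat; auto|lra].
  - lra.
Qed.

Lemma lists_exist (G : group) (n : nat) (E : nat -> nat -> G -> Defs.C) : l1_matrix G n E -> forall i j k : nat, exists L : list G,
  forall g, (i < n)%nat -> (j < n)%nat -> / (INR k + 1) < Cnorm (E i j g) -> In g L.
Proof.
  intros Hl i j k.
  destruct (Nat.lt_ge_cases i n) as [hi|hi]; [|exists []; intros; lia].
  destruct (Nat.lt_ge_cases j n) as [hj|hj]; [|exists []; intros; lia].
  destruct (l1_finite (E i j) (/ (INR k + 1)) (Hl i j hi hj)) as [L HL].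
  { apply Rinv_0_lt_compat; pose proof (pos_INR k); lra. }
  exists L; auto.
Qed.

Definition Lf (G : group) (n : nat) (E : nat -> nat -> G -> Defs.C) (Hl : l1_matrix G n E) (i j k : nat) : list G :=
  proj1_sig (constructive_indefinite_description _ (lists_exist G n E Hl i j k)).

Definition enum G n E (Hl : l1_matrix G n E) (m : nat) : G :=
  let (i, r) := of_nat m in let (j, r2) := of_nat r in let (k, idx) := of_nat r2 in
  nth idx (Lf G n E Hl i j k) (gone G).

Lemma enum_cover G n E Hl i j g : (i < n)%nat -> (j < n)%nat -> E i j g <> C0 ->
  exists m, enum G n E Hl m = g.
Proof.
  intros hi hj Hg. destruct (small_inv _ (Cnorm_pos _ Hg)) as [k Hk].
  assert (I : In g (Lf G n E Hl i j k)).
  { unfold Lf; destruct (constructive_indefinite_description _ _) as [L HL]; simpl; auto. }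
  destruct (In_nth _ _ (gone G) I) as [idx [_ Hidx]].
  exists (to_nat (i, to_nat (j, to_nat (k, idx)))).
  unfold enum. rewrite !cancel_of_to; auto.
Qed.

Definition cj (G : group) (n : nat) (E : nat -> nat -> G -> Defs.C) (Hl : l1_matrix G n E) (m : nat) : G :=
  let (m1, m2) := of_nat m in
  epsilon (inhabits (gone G))
    (fun c => enum G n E Hl m2 = gmul G (ginv G c) (gmul G (enum G n E Hl m1) c)).

Lemma cj_spec G n E Hl m1 m2 : conjugate G (enum G n E Hl m1) (enum G n E Hl m2) ->
  let c := cj G n E Hl (to_nat (m1, m2)) in
  enum G n E Hl m2 = gmul G (ginv G c) (gmul G (enum G n E Hl m1) c).
Proof.
  intros Hc c. unfold c, cj. rewrite cancel_of_to.
  apply (epsilon_spec (inhabits (gone G)) (fun c => enum G n E Hl m2 = gmul G (ginv G c) (gmul G (enum G n E Hl m1) c))). exact Hc.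
Qed.

Definition gen (G : group) (n : nat) (E : nat -> nat -> G -> Defs.C) (Hl : l1_matrix G n E) (m : nat) : G :=
  let (k, m') := of_nat m in
  match k with O => enum G n E Hl m' | S _ => cj G n E Hl m' end.

Lemma gen_enum G n E Hl m : gen G n E Hl (to_nat (0%nat, m)) = enum G n E Hl m.
Proof. unfold gen; rewrite cancel_of_to; auto. Qed.
Lemma gen_cj G n E Hl m : gen G n E Hl (to_nat (1%nat, m)) = cj G n E Hl m.
Proof. unfold gen; rewrite cancel_of_to; auto. Qed.

Lemma gpow_proj (G : group) (S : subgroup G) (y : sub_T G S) k :
  proj1_sig (gpow (sub_group G S) y k) = gpow G (proj1_sig y) k.
Proof. induction k; simpl; auto. rewrite <- IHk; auto. Qed.

Lemma trace_nz (G : group) (n : nat) (E : nat -> nat -> G -> Defs.C) g : mx_trace G n E g <> C0 ->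
  exists i, (i < n)%nat /\ E i i g <> C0.
Proof.
  intros H. apply NNPP; intros N. apply H. unfold mx_trace. apply Csum_zero.
  intros i Ii. apply in_seq in Ii. apply NNPP; intros Z. apply N. exists i; split; [lia|auto].
Qed.

Lemma conv_nz (G : group) (n : nat) (E : nat -> nat -> G -> Defs.C) i (F : nat -> Defs.C) h :
  Csum (fun j => Cmul (E i j h) (F j)) (seq 0 n) <> C0 ->
  exists j, (j < n)%nat /\ E i j h <> C0.
Proof.
  intros H. apply NNPP; intros N. apply H. apply Csum_zero.
  intros j Ij. apply in_seq in Ij. destruct (classic (E i j h = C0)) as [Z|Z].
  - rewrite Z; apply Cmul_0_l.
  - exfalso; apply N; exists j; split; [lia|auto].
Qed.

Lemma S_in_H (G : group) (n : nat) (E : nat -> nat -> G -> Defs.C) (Hl : l1_matrix G n E) i j g : (i < n)%nat -> (j < n)%nat -> E i j g <> C0 ->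
  sg_mem G (genH G (gen G n E Hl)) g.
Proof.
  intros hi hj Hg. destruct (enum_cover G n E Hl i j g hi hj Hg) as [m <-].
  rewrite <- gen_enum. apply genH_gen.
Qed.

Lemma conj_in_H (G : group) (n : nat) (E : nat -> nat -> G -> Defs.C) (Hl : l1_matrix G n E) i j i' j' a b : (i < n)%nat -> (j < n)%nat -> E i j a <> C0 ->
  (i' < n)%nat -> (j' < n)%nat -> E i' j' b <> C0 -> conjugate G a b ->
  exists c, sg_mem G (genH G (gen G n E Hl)) c /\ b = gmul G (ginv G c) (gmul G a c).
Proof.
  intros hi hj Ha hi' hj' Hb Hab.
  destruct (enum_cover G n E Hl i j a hi hj Ha) as [ma <-].
  destruct (enum_cover G n E Hl i' j' b hi' hj' Hb) as [mb <-].
  exists (cj G n E Hl (to_nat (ma, mb))). split.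
  - rewrite <- gen_cj. apply genH_gen.
  - apply (cj_spec G n E Hl ma mb Hab).
Qed.

Theorem lemma1p5 (G : group) :
  (forall H : subgroup G, countable_group (sub_group G H) ->
     l1_Bass (sub_group G H)) ->
  l1_Bass G.
Proof.
  intros Hyp n E Hl Hid.
  set (H := genH G (gen G n E Hl)).
  set (E' := fun i j (h : sub_T G H) => E i j (proj1_sig h)).
  assert (Hl' : l1_matrix (sub_group G H) n E').
  { intros i j hi hj. destruct (Hl i j hi hj) as [M HM]. exists M. intros L ND.
    unfold E'. rewrite <- (Rsum_map (fun x => Cnorm (E i j x)) (fun h : sub_T G H => proj1_sig h)).
    apply HM. apply Injective_map_NoDup; auto. apply proj1_inj. }
  assert (Hid' : idempotent_l1 (sub_group G H) n E').
  { intros i k hi hk g.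
    exact (transfer G H (fun _ => True) (fun _ => True)
      (fun h0 => Csum (fun j => Cmul (E i j h0) (E j k (gmul G (ginv G h0) (proj1_sig g)))) (seq 0 n))
      (E i k (proj1_sig g)) (fun _ _ => I)
      (fun g0 _ Hnz => match conv_nz G n E i _ g0 Hnz with
         | ex_intro _ j (conj hj Hj) => ex_intro _ (exist _ g0 (S_in_H G n E Hl i j g0 hi hj Hj)) (conj eq_refl I) end)
      (Hid i k hi hk (proj1_sig g))). }
  destruct (Hyp H (genH_countable _ _) n E' Hl' Hid') as [LH [HLfin HLH]].
  exists (map (fun h : sub_T G H => proj1_sig h) LH). split.
  - intros y Iy. apply in_map_iff in Iy. destruct Iy as [h [<- Ih]].
    destruct (HLfin h Ih) as [k [hk Hk]]. exists k; split; auto.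
    rewrite <- gpow_proj, Hk; auto.
  - intros x s Hcv Hs.
    destruct (classic (exists a, conjugate G x a /\ mx_trace G n E a <> C0)) as [[a [Hxa Ha]]|Hno].
    + destruct (trace_nz G n E a Ha) as [ia [hia Hia]].
      set (asub := exist (sg_mem G H) a (S_in_H G n E Hl ia ia a hia hia Hia) : sub_T G H).
      assert (cvH : class_value (sub_group G H) (mx_trace (sub_group G H) n E') asub s).
      { unfold class_value.
        refine (transfer G H (conjugate G x) (conjugate (sub_group G H) asub) (mx_trace G n E) s _ _ Hcv).
        - intros h [c Hc]. apply (conj_trans G x a); auto. exists (proj1_sig c).
          rewrite Hc; reflexivity.
        - intros g Hxg Hg. destruct (trace_nz G n E g Hg) as [ig [hig Hig]].
          exists (exist (sg_mem G H) g (S_in_H G n E Hl ig ig g hig hig Hig)). split; auto.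
          assert (Hag : conjugate G a g) by (apply (conj_trans G a x); auto; apply conj_sym; auto).
          destruct (conj_in_H G n E Hl ia ia ig ig a g hia hia Hia hig hig Hig Hag) as [c [Hc Ec]].
          exists (exist (sg_mem G H) c Hc). apply sub_eq; simpl. exact Ec. }
      destruct (HLH asub s cvH Hs) as [y [Iy Hay]].
      exists (proj1_sig y). split; [apply in_map; auto|].
      apply (conj_trans G x a); auto. destruct Hay as [c Hc]. exists (proj1_sig c).
      rewrite Hc; reflexivity.
    + exfalso; apply Hs. apply (zero_sum G (conjugate G x) (mx_trace G n E) s); auto.
      intros z Hz. apply NNPP; intros N. apply Hno; eauto.
Qed.
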